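(* Let $0\to N\xrightarrow{i} G\xrightarrow{p} Q\to 1$ be a short exact sequence of groups with $N$ abelian (groups are written additively, but $G$ and $Q$ need not be abelian; we identify $N$ with $i(N)$). Let $End^Q_N(G)$ be the set of endomorphisms $\alpha:G\to G$ with $\alpha(N)\subseteq N$ and $p\circ\alpha=p$, and let $End^{N,Q}(G)\subseteq End^Q_N(G)$ be the subset of those $\alpha$ that moreover satisfy $\alpha|_N=\mathrm{id}_N$. Let $End_Q(N)$ be the ring of $Q$-module endomorphisms of $N$, and let $\rho:End^Q_N(G)\to End_Q(N)$ be $\rho(\alpha)=\alpha|_N$. Then: (1) The operations $$(\alpha_1\boxplus\alpha_2)(x):=\alpha_1(x)-x+\alpha_2(x),\qquad (\alpha_2\boxtimes\alpha_1)(x):=\alpha_2(\alpha_1(x))-\alpha_1(x)+x-\alpha_2(x)+x$$ ($\alpha_1,\alpha_2\in End^Q_N(G)$, $x\in G$) define an associative (not necessarily unital) ring structure on $End^Q_N(G)$, with addition $\boxplus$ and multiplication $\boxtimes$, whose zero element is $\mathrm{id}_G$. (2) $End^{N,Q}(G)$ is an ideal of this ring with $\alpha\boxtimes\beta=\mathrm{id}_G$ for all $\alpha,\beta\in End^{N,Q}(G)$ (a square zero ideal), and on $End^{N,Q}(G)$ the operation $\boxplus$ coincides with composition of endomorphisms. (3) $\rho$ is a ring homomorphism, and there is an exact sequence of abelian groups $$0\to End^{N,Q}(G)\to End^Q_N(G)\xrightarrow{\rho} End_Q(N)\xrightarrow{\eta} H^2(Q,N)\xrightarrow{p^*} H^2(G,N),$$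 where the first map is the inclusion, $\eta$ is the transgression map of the five-term exact sequence associated to the extension, and $p^*$ is inflation.
   Context: $N$ is a $Q$-module (and a $G$-module) via conjugation in $G$: for $\bar y=p(y)\in Q$ and $n\in N$, $\bar y\cdot n=y+n-y$; this is well defined since $N$ is abelian. $End_Q(N)$ is a ring under pointwise addition and composition. $H^2(Q,N)$, $H^2(G,N)$ denote the usual group cohomology with these actions. *)

(* Defs.v *)
(* Groups G, Q : possibly infinite, non-abelian groups
   (mathcomp's [groupType] from boot/monoid.v, written multiplicatively:
   the paper's additive  x + y, -x, 0  are  x * y, x^-1, 1  here). *)
From HB Require Import structures.
From mathcomp Require Import all_boot all_algebra.
From Stdlib Require Import ClassicalEpsilon.

Set Implicit Arguments.
Unset Strict Implicit.
Unset Printing Implicit Defensive.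

Import GRing.Theory.
Local Open Scope ring_scope.

Section Defs.

Variables (G Q : groupType) (N : zmodType).

Definition is_ghom (H K : groupType) (f : H -> K) : Prop :=
  forall x y, f (x * y)%g = (f x * f y)%g.

Definition short_exact (i : N -> G) (p : G -> Q) : Prop :=
  [/\ forall a b, i (a + b) = (i a * i b)%g,
      injective i,
      is_ghom p,
      (forall q, exists y, p y = q) &
      (forall y, p y = 1%g <-> exists n, y = i n)].

(* a chosen preimage (used only for elements known to be in the image) *)
Definition preim (A B : Type) (a0 : A) (f : A -> B) (b : B) : A :=
  epsilon (inhabits a0) (fun a => f a = b).

Variables (i : N -> G) (p : G -> Q).

Definition iinv (x : G) : N := preim 0 i x.
Definition lift (q : Q) : G := preim 1%g p q.

Definition qact (q : Q) (n : N) : N := iinv (lift q * i n * (lift q)^-1)%g.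
Definition gact (y : G) (n : N) : N := qact (p y) n.

Definition EndQN (a : G -> G) : Prop :=
  [/\ is_ghom a, (forall n, exists m, a (i n) = i m) & (forall x, p (a x) = p x)].

Definition EndNQ (a : G -> G) : Prop := EndQN a /\ (forall n, a (i n) = i n).

Definition EndQ (f : N -> N) : Prop :=
  (forall a b, f (a + b) = f a + f b) /\ (forall q n, f (qact q n) = qact q (f n)).

Definition boxplus (a1 a2 : G -> G) : G -> G :=
  fun x => (a1 x * x^-1 * a2 x)%g.
Definition boxtimes (a2 a1 : G -> G) : G -> G :=
  fun x => (a2 (a1 x) * (a1 x)^-1 * x * (a2 x)^-1 * x)%g.

Definition rho (a : G -> G) : N -> N := fun n => iinv (a (i n)) - n.

End Defs.

Definition nonunital_ring_on (T : Type) (S : T -> Prop)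
    (add mul : T -> T -> T) (z : T) : Prop :=
  S z /\
  (forall a b, S a -> S b -> S (add a b)) /\
  (forall a b, S a -> S b -> S (mul a b)) /\
  (forall a, S a -> exists b, S b /\ add a b = z) /\
  (forall a b c, S a -> S b -> S c -> add a (add b c) = add (add a b) c) /\
  (forall a b, S a -> S b -> add a b = add b a) /\
  (forall a, S a -> add z a = a) /\
  (forall a b c, S a -> S b -> S c -> mul a (mul b c) = mul (mul a b) c) /\
  (forall a b c, S a -> S b -> S c ->
     mul a (add b c) = add (mul a b) (mul a c) /\
     mul (add a b) c = add (mul a c) (mul b c)).

Definition ideal_of (T : Type) (S I : T -> Prop)
    (add mul : T -> T -> T) (z : T) : Prop :=
  [/\ (forall a, I a -> S a),
      I z,
      (forall a b, I a -> I b -> I (add a b)),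
      (forall a, I a -> exists b, I b /\ add a b = z) &
      (forall a b, I a -> S b -> I (mul a b) /\ I (mul b a))].

Definition cocycle2 (H : groupType) (N : zmodType) (act : H -> N -> N)
    (z : H -> H -> N) : Prop :=
  forall h1 h2 h3,
    z h1 h2 + z (h1 * h2)%g h3 = act h1 (z h2 h3) + z h1 (h2 * h3)%g.

Definition coboundary2 (H : groupType) (N : zmodType) (act : H -> N -> N)
    (z : H -> H -> N) : Prop :=
  exists b : H -> N, forall h1 h2,
    z h1 h2 = act h1 (b h2) - b (h1 * h2)%g + b h1.

(* The factor set of the extension w.r.t. the section [lift]:
   c(q1,q2) = s(q1) + s(q2) - s(q1 q2) in N;  [c] in H^2(Q,N) is the
   extension class. *)
Definition ext_cocycle (G Q : groupType) (N : zmodType) (i : N -> G) (p : G -> Q)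
    (q1 q2 : Q) : N :=
  iinv i (lift p q1 * lift p q2 * (lift p (q1 * q2)%g)^-1)%g.

(* transgression eta : End_Q(N) -> H^2(Q,N), f |-> [f o c] (representative) *)
Definition eta_rep (G Q : groupType) (N : zmodType) (i : N -> G) (p : G -> Q)
    (f : N -> N) : Q -> Q -> N :=
  fun q1 q2 => f (ext_cocycle i p q1 q2).

Definition infl (G Q : groupType) (N : zmodType) (p : G -> Q)
    (z : Q -> Q -> N) : G -> G -> N :=
  fun y1 y2 => z (p y1) (p y2).

(* Main.v *)
Require Import Defs.
From mathcomp Require Import all_boot all_algebra.
From Stdlib Require Import ClassicalEpsilon FunctionalExtensionality.

Set Implicit Arguments.
Unset Strict Implicit.
Unset Printing Implicit Defensive.

Import GRing.Theory.
Local Open Scope ring_scope.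
Local Open Scope group_scope.

Ltac gsimp := repeat progress rewrite ?invgM ?invgK ?mulgA ?mulgK ?mulgVK ?mulg1 ?mul1g ?invg1 ?mulgV ?mulVg; try done.

Section Base.
Variables (G Q : groupType) (N : zmodType) (i : N -> G) (p : G -> Q).
Hypothesis SE : short_exact i p.

Lemma iD a b : i (a + b) = i a * i b. Proof. by case: SE. Qed.
Lemma i_inj : injective i. Proof. by case: SE. Qed.
Lemma pM x y : p (x * y) = p x * p y. Proof. by case: SE => _ _ h. Qed.
Lemma p_surj q : exists y, p y = q. Proof. by case: SE. Qed.
Lemma pker y : p y = 1 <-> exists n, y = i n. Proof. by case: SE. Qed.

Lemma i0 : i 0 = 1.
Proof. by apply: (mulgI (i 0)); rewrite -iD addr0 mulg1. Qed.
Lemma iN a : i (- a) = (i a)^-1.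
Proof. by apply: (mulgI (i a)); rewrite -iD subrr i0 mulgV. Qed.
Lemma iB a b : i (a - b) = i a * (i b)^-1.
Proof. by rewrite iD iN. Qed.
Lemma icomm a b : i a * i b = i b * i a.
Proof. by rewrite -!iD addrC. Qed.
Lemma p1 : p 1 = 1.
Proof. by apply: (mulgI (p 1)); rewrite -pM !mulg1. Qed.
Lemma pV x : p x^-1 = (p x)^-1.
Proof. by apply: (mulgI (p x)); rewrite -pM !mulgV p1. Qed.
Lemma pi n : p (i n) = 1.
Proof. by apply/pker; exists n. Qed.

Lemma lift_p q : p (Defs.lift p q) = q.
Proof. rewrite /Defs.lift /preim. apply: (epsilon_spec (inhabits 1) (fun a => p a = q)). exact: p_surj. Qed.

Lemma iinvK n : Defs.iinv i (i n) = n.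
Proof.
apply: i_inj; rewrite /Defs.iinv /preim.
apply: (epsilon_spec (inhabits 0) (fun a => i a = i n)). by exists n.
Qed.

Lemma iiinv y : p y = 1 -> i (Defs.iinv i y) = y.
Proof. by case/pker=> n ->; rewrite iinvK. Qed.

Lemma conjN y n : p (y * i n * y^-1) = 1.
Proof. by rewrite !pM pi pV mulg1 mulgV. Qed.

Lemma gactE y n : i (gact i p y n) = y * i n * y^-1.
Proof.
rewrite /gact /qact iiinv ?conjN //.
set s := Defs.lift p (p y).
have : p (y * s^-1) = 1 by rewrite pM pV lift_p mulgV.
case/pker=> m Hm.
have -> : y = i m * s by rewrite -Hm mulgVK.
have : p (s * i n * s^-1) = 1 by apply: conjN.
case/pker=> k Hk.
rewrite Hk; transitivity (i m * (s * i n * s^-1) * (i m)^-1); last by gsimp.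
by rewrite Hk icomm mulgK.
Qed.

Lemma qactE q n : i (qact i p q n) = Defs.lift p q * i n * (Defs.lift p q)^-1.
Proof. by rewrite -gactE /gact lift_p. Qed.

Lemma gact_lift q n : gact i p (Defs.lift p q) n = qact i p q n.
Proof. by rewrite /gact lift_p. Qed.

Lemma gactD y a b : gact i p y (a + b) = gact i p y a + gact i p y b.
Proof. apply: i_inj; rewrite !iD !gactE iD; gsimp. Qed.
Lemma gact0 y : gact i p y 0 = 0.
Proof. by apply: (addrI (gact i p y 0)); rewrite -gactD !addr0. Qed.
Lemma gactN y a : gact i p y (- a) = - gact i p y a.
Proof. by apply: (addrI (gact i p y a)); rewrite -gactD !subrr gact0. Qed.
Lemma gactB y a b : gact i p y (a - b) = gact i p y a - gact i p y b.
Proof. by rewrite gactD gactN. Qed.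
Lemma gactM x y n : gact i p (x * y) n = gact i p x (gact i p y n).
Proof. apply: i_inj; rewrite !gactE; by gsimp. Qed.
Lemma gact_i m n : gact i p (i m) n = n.
Proof. apply: i_inj; by rewrite !gactE icomm mulgK. Qed.
Lemma gact1 n : gact i p 1 n = n.
Proof. by rewrite -i0 gact_i. Qed.
Lemma qact1 n : qact i p 1 n = n.
Proof. by rewrite -gact_lift -[Defs.lift p 1]iiinv ?lift_p // gact_i. Qed.
Lemma qactD q a b : qact i p q (a + b) = qact i p q a + qact i p q b.
Proof. by rewrite -!gact_lift gactD. Qed.
Lemma qactN q a : qact i p q (- a) = - qact i p q a.
Proof. by rewrite -!gact_lift gactN. Qed.
Lemma qactB q a b : qact i p q (a - b) = qact i p q a - qact i p q b.
Proof. by rewrite -!gact_lift gactB. Qed.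

Definition der (d : G -> N) := forall x y, d (x * y) = d x + gact i p x (d y).
Definition Phi (d : G -> N) : G -> G := fun x => i (d x) * x.
Definition dd (a : G -> G) : G -> N := fun x => Defs.iinv i (a x * x^-1).

Lemma ddE a x : p (a x) = p x -> i (dd a x) = a x * x^-1.
Proof. by move=> h; rewrite /dd iiinv // pM pV h mulgV. Qed.

Lemma dPhi d : dd (Phi d) = d.
Proof. by apply: functional_extensionality => x; rewrite /dd /Phi mulgK iinvK. Qed.

Lemma Phi_EndQN d : der d -> EndQN i p (Phi d).
Proof.
move=> hd; split.
- move=> x y; rewrite /Phi hd iD gactE; by gsimp.
- by move=> n; exists (d (i n) + n); rewrite /Phi iD.
- by move=> x; rewrite /Phi pM pi mul1g.
Qed.

Lemma EndQN_Phi a : EndQN i p a -> exists2 d, der d & a = Phi d.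
Proof.
case=> ha _ hp; exists (dd a).
  move=> x y; apply: i_inj; rewrite iD gactE !ddE // ha; by gsimp.
by apply: functional_extensionality => x; rewrite /Phi ddE // mulgVK.
Qed.

Lemma der1 d : der d -> d 1 = 0.
Proof.
move=> hd; have := hd 1 1; rewrite mulg1 gact1 => h.
by apply: (addrI (d 1)); rewrite addr0 -h.
Qed.

Lemma der_iD d : der d -> forall m n, d (i (m + n)) = d (i m) + d (i n).
Proof. by move=> hd m n; rewrite iD hd gact_i. Qed.

Lemma der_i0 d : der d -> d (i 0) = 0.
Proof. by move=> hd; rewrite i0 der1. Qed.

Lemma der_V d : der d -> forall x, gact i p x (d x^-1) = - d x.
Proof.
move=> hd x; apply: (addrI (d x)); rewrite -hd mulgV der1 // subrr //.
Qed.

Lemma der_eq d : der d -> forall x m, d (i (gact i p x m)) = gact i p x (d (i m)).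
Proof.
move=> hd x m; rewrite gactE hd hd gactM gact_i der_V //.
by rewrite addrAC subrr add0r.
Qed.

Lemma der_add d1 d2 : der d1 -> der d2 -> der (fun x => d1 x + d2 x).
Proof.
move=> h1 h2 x y; rewrite h1 h2 gactD.
by rewrite -!addrA; congr (_ + _); rewrite addrCA.
Qed.

Lemma der_opp d : der d -> der (fun x => - d x).
Proof. by move=> h x y; rewrite h gactN opprD. Qed.

Lemma der0 : der (fun _ => 0).
Proof. by move=> x y; rewrite gact0 addr0. Qed.

Lemma der_comp d2 d1 : der d2 -> der d1 -> der (fun x => d2 (i (d1 x))).
Proof. by move=> h2 h1 x y; rewrite h1 der_iD // der_eq. Qed.

Lemma Phi0 : Phi (fun _ => 0) = id.
Proof. by apply: functional_extensionality => x; rewrite /Phi i0 mul1g. Qed.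

Lemma Phi_inj d1 d2 : Phi d1 = Phi d2 -> d1 = d2.
Proof. by move=> h; rewrite -(dPhi d1) h dPhi. Qed.

Lemma bpE d1 d2 : boxplus (Phi d1) (Phi d2) = Phi (fun x => d1 x + d2 x).
Proof. apply: functional_extensionality => x; rewrite /boxplus /Phi iD; by gsimp. Qed.

Lemma btE d2 d1 : der d2 -> boxtimes (Phi d2) (Phi d1) = Phi (fun x => d2 (i (d1 x))).
Proof.
move=> h; apply: functional_extensionality => x; rewrite /boxtimes /Phi.
rewrite h gact_i iD; by gsimp.
Qed.

Lemma rhoE d : der d -> rho i (Phi d) = fun n => d (i n).
Proof.
move=> h; apply: functional_extensionality => n.
by rewrite /rho /Phi -iD iinvK addrK.
Qed.

Lemma EndNQ_Phi d : der d -> (EndNQ i p (Phi d) <-> forall n, d (i n) = 0).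
Proof.
move=> h; split.
- case=> _ H n; have := H n; rewrite /Phi => /(congr1 (fun z => z * (i n)^-1)).
  by rewrite mulgK mulgV -i0 => /i_inj.
- move=> H; split; first exact: Phi_EndQN.
  by move=> n; rewrite /Phi H i0 mul1g.
Qed.


Notation s := (Defs.lift p).
Notation c := (ext_cocycle i p).

Lemma cE q1 q2 : i (c q1 q2) = s q1 * s q2 * (s (q1 * q2))^-1.
Proof. by rewrite /ext_cocycle iiinv // !pM pV !lift_p mulgV. Qed.

Lemma c_mul q1 q2 : s q1 * s q2 = i (c q1 q2) * s (q1 * q2).
Proof. by rewrite cE mulgVK. Qed.

Lemma c_cocycle q1 q2 q3 :
  c q1 q2 + c (q1 * q2) q3 = qact i p q1 (c q2 q3) + c q1 (q2 * q3).
Proof.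
apply: i_inj; rewrite !iD qactE !cE [(q1 * (q2 * q3))]mulgA; by gsimp.
Qed.

Definition nu (y : G) : N := Defs.iinv i (y * (s (p y))^-1).

Lemma nuE y : i (nu y) = y * (s (p y))^-1.
Proof. by rewrite /nu iiinv // pM pV lift_p mulgV. Qed.

Lemma nu_mul x y : nu (x * y) = nu x + qact i p (p x) (nu y) + c (p x) (p y).
Proof. apply: i_inj; rewrite !iD qactE cE !nuE pM; by gsimp. Qed.

Lemma nu_i n : nu (i n) = n + nu 1.
Proof. by apply: i_inj; rewrite iD !nuE pi p1 mul1g. Qed.

Lemma EndQ0 f : EndQ i p f -> f 0 = 0.
Proof. by case=> h _; apply: (addrI (f 0)); rewrite -h !addr0. Qed.
Lemma EndQN' f : EndQ i p f -> forall a, f (- a) = - f a.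
Proof.
move=> h a; apply: (addrI (f a)); case: (h) => hD _.
by rewrite -hD !subrr EndQ0.
Qed.

Lemma eta_cocycle f : EndQ i p f -> cocycle2 (qact i p) (eta_rep i p f).
Proof.
case=> hD hq q1 q2 q3; rewrite /eta_rep -hD -hq -hD.
by rewrite c_cocycle.
Qed.

Lemma rho_cob d : der d -> coboundary2 (qact i p) (eta_rep i p (fun n => d (i n))).
Proof.
move=> hd; exists (fun q => d (s q)) => q1 q2; rewrite /eta_rep.
have h1 := hd (s q1) (s q2); rewrite c_mul hd gact_i gact_lift in h1.
rewrite -[d (i (c q1 q2))](addrK (d (s (q1 * q2)))) h1.
by rewrite [_ + qact _ _ _ _]addrC addrAC.
Qed.


Lemma cob_rho f : EndQ i p f -> coboundary2 (qact i p) (eta_rep i p f) ->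
  exists a, EndQN i p a /\ rho i a = f.
Proof.
move=> hf [b hb]; case: (hf) => hD hq.
set d := fun x => f (nu x) + b (p x).
have hd : der d.
  move=> x y; rewrite /d nu_mul !hD hq.
  have := hb (p x) (p y); rewrite /eta_rep => ->; rewrite pM /gact qactD.
  rewrite [_ - _ + _]addrAC addrA subrK.
  by rewrite -!addrA; congr (_ + _); rewrite addrA addrC.
exists (Phi d); split; first exact: Phi_EndQN.
rewrite rhoE //; apply: functional_extensionality => n.
have := der1 hd; rewrite /d nu_i hD pi p1 => h.
by rewrite -addrA h addr0.
Qed.


Lemma ab1 (A B C D E Z : N) :
  Z = -(B + C) - - (A + B + (Z + (C - D + E)) + D) - (A + E).
Proof.
rewrite opprK (addrC A B) -!addrA opprD -addrA (addrCA (-C) B) addKr.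
rewrite (addrCA Z C) (addrCA A C) addKr (addrCA E D) addKr.
by rewrite (addrC A E) opprD addNKr addrCA subrr addr0.
Qed.
Lemma ab2 (X Y W Z : N) : Z = Y - W + X -> W - Z = X - Z + (Y - Z).
Proof.
by move=> ->; rewrite (addrC _ X) opprD addNKr opprB -[W - Y + _]addrA addKr.
Qed.
Lemma ab2' (X Y W Z : N) : Z = Y - W + X -> Z - W = Z - X + (Z - Y).
Proof. by move=> h; rewrite -[Z - W]opprB (ab2 h) opprD !opprB. Qed.
Lemma abK1 (U P Y : N) : U - (U - P + Y) = P - Y.
Proof. by rewrite -addrA opprD addNKr opprD opprK. Qed.
Lemma abK2 (B P Y : N) : B - (Y - P + B) = P - Y.
Proof. by rewrite (addrC _ B) opprD addNKr opprB. Qed.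
Lemma ab3 (U V P Y B W : N) : V = U - P + Y -> W = Y - P + B -> W - B = V - U.
Proof. by move=> -> ->; rewrite -opprB abK2 -[U - P + Y - U]opprB abK1. Qed.
Lemma ab4 (Z T S Cc U V z12 : N) : Z = T - S + Cc -> z12 = U - S + V ->
  Z - Cc - z12 = - U + T + - V.
Proof.
move=> -> ->; rewrite addrK (addrAC U) opprB addrA subrK opprD addrA (addrC T) //.
Qed.

Lemma infl_fwd z f : EndQ i p f ->
  coboundary2 (qact i p) (fun q1 q2 => eta_rep i p f q1 q2 - z q1 q2) ->
  coboundary2 (gact i p) (infl p z).
Proof.
move=> hf [b hb]; case: (hf) => hD hq.
exists (fun y => - (f (nu y) + b (p y))) => y1 y2; rewrite /infl.
have hc : f (c (p y1) (p y2)) = z (p y1) (p y2) +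
   (qact i p (p y1) (b (p y2)) - b (p y1 * p y2) + b (p y1)).
  by rewrite -(hb (p y1) (p y2)) /eta_rep addrC subrK.
rewrite nu_mul !hD hq hc pM /gact qactN qactD.
exact: ab1.
Qed.

Lemma infl_bwd z : cocycle2 (qact i p) z -> coboundary2 (gact i p) (infl p z) ->
  exists f, EndQ i p f /\
    coboundary2 (qact i p) (fun q1 q2 => eta_rep i p f q1 q2 - z q1 q2).
Proof.
move=> hz [be hb]; rewrite /infl in hb.
have z1q q : z 1 q = z 1 1.
  have := hz 1 1 q; rewrite !mul1g qact1 => /addIr; done.
have zq1 q : z q 1 = qact i p q (z 1 1).
  have := hz q 1 1; rewrite !mulg1 => /addIr; done.
pose f n := z 1 1 - be (i n).
have fD m n : f (m + n) = f m + f n.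
  have := hb (i m) (i n); rewrite !pi gact_i -iD /f; exact: ab2'.
have fq q n : f (qact i p q n) = qact i p q (f n).
  have h1 := hb (s q) (i n); rewrite lift_p pi gact_lift zq1 in h1.
  have h2 := hb (i (qact i p q n)) (s q); rewrite lift_p pi gact_i z1q in h2.
  have e : s q * i n = i (qact i p q n) * s q by rewrite qactE mulgVK.
  rewrite e in h1.
  rewrite /f qactB; exact: ab3 h1 h2.
exists f; split; first by split.
exists (fun q => - be (s q)) => q1 q2; rewrite /eta_rep qactN opprK.
have h3 := hb (i (c q1 q2)) (s (q1 * q2)); rewrite pi lift_p gact_i z1q -c_mul in h3.
have h4 := hb (s q1) (s q2); rewrite !lift_p gact_lift in h4.
rewrite /f; exact: ab4 h3 h4.
Qed.


Lemma EndNQ_Phi' a : EndNQ i p a -> exists2 d, der d & (a = Phi d /\ forall n, d (i n) = 0).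
Proof.
move=> Ha; case: (Ha) => /EndQN_Phi [d hd Ea] _; subst a.
by exists d => //; split => //; apply/EndNQ_Phi.
Qed.

Lemma main :
  nonunital_ring_on (EndQN i p) (@boxplus G) (@boxtimes G) id /\
  (ideal_of (EndQN i p) (EndNQ i p) (@boxplus G) (@boxtimes G) id /\
   (forall a b, EndNQ i p a -> EndNQ i p b -> boxtimes a b = id) /\
   (forall a b, EndNQ i p a -> EndNQ i p b -> boxplus a b = a \o b)) /\
  ((forall a, EndQN i p a -> EndQ i p (rho i a)) /\
   (forall a b, EndQN i p a -> EndQN i p b ->
      rho i (boxplus a b) = (fun n => rho i a n + rho i b n) /\
      rho i (boxtimes a b) = rho i a \o rho i b)) /\
  ((forall a, EndQN i p a -> (rho i a = (fun _ => 0) <-> EndNQ i p a)) /\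
   (forall f, EndQ i p f -> cocycle2 (qact i p) (eta_rep i p f)) /\
   (forall f, EndQ i p f ->
      ((exists a, EndQN i p a /\ rho i a = f) <->
       coboundary2 (qact i p) (eta_rep i p f))) /\
   (forall z, cocycle2 (qact i p) z ->
      ((exists f, EndQ i p f /\
          coboundary2 (qact i p) (fun q1 q2 => eta_rep i p f q1 q2 - z q1 q2)) <->
       coboundary2 (gact i p) (infl p z)))).
Proof.
split.
  split; first by rewrite -Phi0; apply: Phi_EndQN; exact: der0.
  split.
    move=> a b /EndQN_Phi [da hda ->] /EndQN_Phi [db hdb ->].
    by rewrite bpE; apply: Phi_EndQN; apply: der_add.
  split.
    move=> a b /EndQN_Phi [da hda ->] /EndQN_Phi [db hdb ->].
    by rewrite btE //; apply: Phi_EndQN; apply: der_comp.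
  split.
    move=> a /EndQN_Phi [da hda ->]; exists (Phi (fun x => - da x)); split.
      by apply: Phi_EndQN; apply: der_opp.
    rewrite bpE -Phi0; congr Phi; apply: functional_extensionality => x.
    exact: subrr.
  split.
    move=> a b c /EndQN_Phi [da hda ->] /EndQN_Phi [db hdb ->] /EndQN_Phi [dc hdc ->].
    rewrite !bpE; congr Phi; apply: functional_extensionality => x; exact: addrA.
  split.
    move=> a b /EndQN_Phi [da hda ->] /EndQN_Phi [db hdb ->].
    rewrite !bpE; congr Phi; apply: functional_extensionality => x; exact: addrC.
  split.
    move=> a /EndQN_Phi [da hda ->].
    rewrite -{1}Phi0 bpE; congr Phi; apply: functional_extensionality => x; exact: add0r.
  split.
    move=> a b c /EndQN_Phi [da hda ->] /EndQN_Phi [db hdb ->] /EndQN_Phi [dc hdc ->].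
    rewrite (btE _ hdb) (btE _ hda) (btE _ hda) (btE _ (der_comp hda hdb)) //.
  move=> a b c /EndQN_Phi [da hda ->] /EndQN_Phi [db hdb ->] /EndQN_Phi [dc hdc ->].
  split.
    rewrite bpE !btE // bpE; congr Phi; apply: functional_extensionality => x.
    exact: der_iD.
  rewrite bpE !btE //; last exact: der_add.
  by rewrite bpE.
split.
  split; first split.
  - by move=> a [].
  - by rewrite -Phi0; apply/EndNQ_Phi; [exact: der0|].
  - move=> a b /EndNQ_Phi' [da hda [-> ha]] /EndNQ_Phi' [db hdb [-> hb]].
    rewrite bpE; apply/EndNQ_Phi; first exact: der_add.
    by move=> n; rewrite ha hb addr0.
  - move=> a /EndNQ_Phi' [da hda [-> ha]]; exists (Phi (fun x => - da x)); split.
      apply/EndNQ_Phi; first exact: der_opp.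
      by move=> n; rewrite ha oppr0.
    rewrite bpE -Phi0; congr Phi; apply: functional_extensionality => x.
    exact: subrr.
  - move=> a b /EndNQ_Phi' [da hda [-> ha]] /EndQN_Phi [db hdb ->]; split.
      rewrite btE //; apply/EndNQ_Phi; first exact: der_comp.
      by move=> n; rewrite ha.
    rewrite btE //; apply/EndNQ_Phi; first exact: der_comp.
    by move=> n; rewrite ha der_i0.
  split.
    move=> a b /EndNQ_Phi' [da hda [-> ha]] /EndNQ_Phi' [db hdb [-> hb]].
    rewrite btE // -Phi0; congr Phi; apply: functional_extensionality => x.
    exact: ha.
  move=> a b /EndNQ_Phi' [da hda [-> ha]] /EndNQ_Phi' [db hdb [-> hb]].
  rewrite bpE; apply: functional_extensionality => x.
  by rewrite /Phi /comp hda ha gact_i add0r iD mulgA.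
split.
  split.
    move=> a /EndQN_Phi [da hda ->]; rewrite rhoE //; split.
      exact: der_iD.
    by move=> q n; rewrite -!gact_lift der_eq.
  move=> a b /EndQN_Phi [da hda ->] /EndQN_Phi [db hdb ->].
  by rewrite bpE btE // (rhoE (der_add hda hdb)) (rhoE (der_comp hda hdb)) !rhoE.
split.
  move=> a /EndQN_Phi [da hda ->]; rewrite rhoE //; split.
    move=> h; apply/EndNQ_Phi => // n.
    exact: (congr1 (fun g => g n) h).
  move/EndNQ_Phi' => [d hd [/Phi_inj -> h0]].
  by apply: functional_extensionality => n.
split; first exact: eta_cocycle.
split.
  move=> f hf; split.
    by case=> a [/EndQN_Phi [da hda ->] <-]; rewrite rhoE //; apply: rho_cob.
  exact: cob_rho.
move=> z hz; split.
  by case=> f [hf hc]; apply: infl_fwd hc.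
exact: infl_bwd.
Qed.

End Base.

Theorem theorem1 (G Q : groupType) (N : zmodType) (i : N -> G) (p : G -> Q) :
  short_exact i p ->
  (* (1) ring structure on End^Q_N(G), zero = id_G *)
  nonunital_ring_on (EndQN i p) (@boxplus G) (@boxtimes G) id /\
  (* (2) End^{N,Q}(G) is a square-zero ideal, on which [+] is composition *)
  (ideal_of (EndQN i p) (EndNQ i p) (@boxplus G) (@boxtimes G) id /\
   (forall a b, EndNQ i p a -> EndNQ i p b -> boxtimes a b = id) /\
   (forall a b, EndNQ i p a -> EndNQ i p b -> boxplus a b = a \o b)) /\
  (* (3) rho is a ring homomorphism into End_Q(N) ... *)
  ((forall a, EndQN i p a -> EndQ i p (rho i a)) /\
   (forall a b, EndQN i p a -> EndQN i p b ->
      rho i (boxplus a b) = (fun n => rho i a n + rho i b n) /\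
      rho i (boxtimes a b) = rho i a \o rho i b)) /\
  (* ... and the sequence
     0 -> End^{N,Q}(G) -> End^Q_N(G) -rho-> End_Q(N) -eta-> H^2(Q,N) -p^*-> H^2(G,N)
     is exact *)
  ((forall a, EndQN i p a -> (rho i a = (fun _ => 0) <-> EndNQ i p a)) /\
   (forall f, EndQ i p f -> cocycle2 (qact i p) (eta_rep i p f)) /\
   (forall f, EndQ i p f ->
      ((exists a, EndQN i p a /\ rho i a = f) <->
       coboundary2 (qact i p) (eta_rep i p f))) /\
   (forall z, cocycle2 (qact i p) z ->
      ((exists f, EndQ i p f /\
          coboundary2 (qact i p) (fun q1 q2 => eta_rep i p f q1 q2 - z q1 q2)) <->
       coboundary2 (gact i p) (infl p z)))).
Proof. by move=> SE; exact: main SE. Qed.
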